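(* (I) Let $\varepsilon>0$. For all compact metric spaces $(X,d_X)$, $(Y,d_Y)$: $d^\varepsilon_{GH}(X,Y)\le d_{GH}(X,Y)$. (II) Let $\varepsilon,D>0$. If $(X,d_X)$ and $(Y,d_Y)$ are compact length spaces with $\operatorname{diam}(X),\operatorname{diam}(Y)\le D$, then $d_{GH}(X,Y)\le\big(\frac{2D}{\varepsilon}+1\big)d^\varepsilon_{GH}(X,Y)$.
   Context: The $\varepsilon$-truncation of a metric $d$ is $d_\varepsilon(x,y)=\min\{d(x,y),\varepsilon\}$; $d^\varepsilon_{GH}((X,d_X),(Y,d_Y)):=d_{GH}((X,d_{X,\varepsilon}),(Y,d_{Y,\varepsilon}))$ where $d_{GH}$ is the Gromov–Hausdorff distance. A length space is a metric space whose distance equals the infimum of lengths of connecting curves. *)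

(* Defs.v *)
From Stdlib Require Import Reals.
From Coquelicot Require Import Coquelicot.
Open Scope R_scope.

Definition is_metric {X : Type} (d : X -> X -> R) : Prop :=
  (forall x y, 0 <= d x y) /\
  (forall x y, d x y = 0 <-> x = y) /\
  (forall x y, d x y = d y x) /\
  (forall x y z, d x z <= d x y + d y z).

Definition m_open {X : Type} (d : X -> X -> R) (U : X -> Prop) : Prop :=
  forall x, U x -> exists r, 0 < r /\ forall y, d x y < r -> U y.

Definition m_compact {X : Type} (d : X -> X -> R) : Prop :=
  forall (I : Type) (U : I -> X -> Prop),
    (forall i, m_open d (U i)) ->
    (forall x, exists i, U i x) ->
    exists l : list I, forall x, exists i, List.In i l /\ U i x.

Definition compact_metric_space {X : Type} (d : X -> X -> R) : Prop :=
  is_metric d /\ m_compact d.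

Definition trunc {X : Type} (eps : R) (d : X -> X -> R) : X -> X -> R :=
  fun x y => Rmin (d x y) eps.

Definition diam {X : Type} (d : X -> X -> R) : Rbar :=
  Lub_Rbar (fun r => exists x y, r = d x y).

Definition isometric_emb {X Z : Type} (dX : X -> X -> R) (dZ : Z -> Z -> R)
  (f : X -> Z) : Prop := forall x x', dZ (f x) (f x') = dX x x'.

Definition hausdorff {Z : Type} (dZ : Z -> Z -> R) (A B : Z -> Prop) : Rbar :=
  Glb_Rbar (fun r => 0 <= r /\
    (forall a, A a -> exists b, B b /\ dZ a b <= r) /\
    (forall b, B b -> exists a, A a /\ dZ a b <= r)).

Definition dGH {X Y : Type} (dX : X -> X -> R) (dY : Y -> Y -> R) : Rbar :=
  Glb_Rbar (fun r => exists (Z : Type) (dZ : Z -> Z -> R) (f : X -> Z) (g : Y -> Z),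
    is_metric dZ /\ isometric_emb dX dZ f /\ isometric_emb dY dZ g /\
    hausdorff dZ (fun z => exists x, z = f x) (fun z => exists y, z = g y)
      = Finite r).

Definition dGH_eps {X Y : Type} (eps : R) (dX : X -> X -> R) (dY : Y -> Y -> R)
  : Rbar := dGH (trunc eps dX) (trunc eps dY).

(** Curves and their length. A curve is a map [0,1] -> X (given as R -> X,
    only its values on [0,1] matter), continuous on [0,1]. *)
Definition curve_continuous {X : Type} (d : X -> X -> R) (g : R -> X) : Prop :=
  forall t, 0 <= t <= 1 -> forall e, 0 < e -> exists delta, 0 < delta /\
    forall s, 0 <= s <= 1 -> Rabs (s - t) < delta -> d (g s) (g t) < e.

Fixpoint psum {X : Type} (d : X -> X -> R) (g : R -> X) (t : nat -> R) (n : nat)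
  : R :=
  match n with
  | O => 0
  | S k => psum d g t k + d (g (t k)) (g (t (S k)))
  end.

Definition curve_length {X : Type} (d : X -> X -> R) (g : R -> X) : Rbar :=
  Lub_Rbar (fun s => exists (n : nat) (t : nat -> R),
    t O = 0 /\ t n = 1 /\ (forall i, (i < n)%nat -> t i <= t (S i)) /\
    s = psum d g t n).

Definition length_space {X : Type} (d : X -> X -> R) : Prop :=
  forall x y, Finite (d x y) =
    Glb_Rbar (fun L => exists g : R -> X,
      curve_continuous d g /\ g 0 = x /\ g 1 = y /\ curve_length d g = Finite L).

(* Main.v *)
Require Import Defs.
From Stdlib Require Import Reals Lra Classical ZArith.
From Coquelicot Require Import Coquelicot.
Open Scope R_scope.

Lemma glb_le (S : R -> Prop) v : S v -> Rbar_le (Glb_Rbar S) (Finite v).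
Proof. intros H. destruct (Glb_Rbar_correct S) as [H1 _]. apply H1, H. Qed.

Lemma glb_ge (S : R -> Prop) w : (forall v, S v -> w <= v) -> Rbar_le (Finite w) (Glb_Rbar S).
Proof. intros H. destruct (Glb_Rbar_correct S) as [_ H2]. apply H2. intros v Hv. apply H, Hv. Qed.

Lemma glb_lt (S : R -> Prop) r : Rbar_lt (Glb_Rbar S) (Finite r) -> exists v, S v /\ v < r.
Proof.
  intros H. apply NNPP. intros N.
  assert (Rbar_le (Finite r) (Glb_Rbar S)).
  { apply glb_ge. intros v Hv. destruct (Rle_dec r v); auto. exfalso; apply N; exists v; split; auto; lra. }
  destruct (Glb_Rbar S); simpl in *; try lra; auto.
Qed.

Lemma glb_fin (S : R -> Prop) v : S v -> (forall w, S w -> 0 <= w) ->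
  Glb_Rbar S = Finite (real (Glb_Rbar S)) /\ 0 <= real (Glb_Rbar S) /\
  (forall w, S w -> real (Glb_Rbar S) <= w) /\
  (forall w, (forall u, S u -> w <= u) -> w <= real (Glb_Rbar S)).
Proof.
  intros Hv H0.
  pose proof (glb_le S v Hv). pose proof (glb_ge S 0 H0).
  destruct (Glb_Rbar S) as [g| |] eqn:E; simpl in *; try tauto.
  repeat split; auto.
  - intros w Hw. pose proof (glb_le S w Hw) as HH. rewrite E in HH. exact HH.
  - intros w Hw. pose proof (glb_ge S w Hw) as HH. rewrite E in HH. exact HH.
Qed.

Lemma rbar_lim (a : Rbar) c : (forall e, 0 < e -> Rbar_le a (Finite (c + e))) -> Rbar_le a (Finite c).
Proof.
  intros H. destruct a as [a| |]; simpl in *.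
  - apply Rle_plus_epsilon. intros e He. apply (H e He).
  - apply (H 1); lra.
  - auto.
Qed.

Lemma rbar_lim2 (a b : Rbar) : (forall r, Rbar_lt a (Finite r) -> Rbar_le b (Finite r)) -> Rbar_le b a.
Proof.
  intros H. destruct a as [a| |].
  - apply rbar_lim. intros e He. apply H. simpl; lra.
  - destruct b; simpl; auto.
  - destruct b as [b| |]; simpl.
    + pose proof (H (b-1) I). simpl in H0. lra.
    + apply (H 0 I).
    + auto.
Qed.

Definition corr_ok {X Y : Type} (dX : X -> X -> R) (dY : Y -> Y -> R) (Rel : X -> Y -> Prop) (c : R) :=
  (forall x, exists y, Rel x y) /\ (forall y, exists x, Rel x y) /\
  (forall x y x' y', Rel x y -> Rel x' y' -> Rabs (dX x x' - dY y y') <= 2 * c).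

Lemma emb_to_corr {X Y Z : Type} (dX : X -> X -> R) (dY : Y -> Y -> R) (dZ : Z -> Z -> R) f g r :
  is_metric dZ -> isometric_emb dX dZ f -> isometric_emb dY dZ g ->
  Rbar_lt (hausdorff dZ (fun z => exists x, z = f x) (fun z => exists y, z = g y)) (Finite r) ->
  exists Rel, corr_ok dX dY Rel r.
Proof.
  intros [M0 [M1 [M2 M3]]] Hf Hg H.
  destruct (glb_lt _ _ H) as [q [[Hq0 [HA HB]] Hqr]].
  exists (fun x y => dZ (f x) (g y) <= q). split; [|split].
  - intros x. destruct (HA (f x) (ex_intro _ x eq_refl)) as [b [[y ->] Hb]]. eauto.
  - intros y. destruct (HB (g y) (ex_intro _ y eq_refl)) as [a [[x ->] Ha]]. eauto.
  - intros x y x' y' H1 H2. rewrite <- (Hf x x'), <- (Hg y y').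
    pose proof (M3 (f x) (g y) (f x')). pose proof (M3 (g y) (g y') (f x')).
    pose proof (M3 (g y) (f x) (g y')). pose proof (M3 (f x) (f x') (g y')).
    rewrite (M2 (g y) (f x)) in *. rewrite (M2 (g y') (f x')) in *.
    apply Rabs_le; lra.
Qed.

Lemma dGH_to_corr {X Y : Type} (dX : X -> X -> R) (dY : Y -> Y -> R) r :
  Rbar_lt (dGH dX dY) (Finite r) -> exists Rel, corr_ok dX dY Rel r.
Proof.
  intros H. destruct (glb_lt _ _ H) as [r0 [[Z [dZ [f [g [HM [Hf [Hg Hh]]]]]]] Hr]].
  apply (emb_to_corr dX dY dZ f g r HM Hf Hg). rewrite Hh. simpl. exact Hr.
Qed.

Definition Gl {X Y : Type} (dX : X -> X -> R) (dY : Y -> Y -> R) (Rel : X -> Y -> Prop) x y :=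
  real (Glb_Rbar (fun v => exists a b, Rel a b /\ v = dX x a + dY b y)).

Lemma Gl_props {X Y : Type} (dX : X -> X -> R) (dY : Y -> Y -> R) (Rel : X -> Y -> Prop) x y :
  is_metric dX -> is_metric dY -> (exists a b, Rel a b) ->
  0 <= Gl dX dY Rel x y /\
  (forall a b, Rel a b -> Gl dX dY Rel x y <= dX x a + dY b y) /\
  (forall w, (forall a b, Rel a b -> w <= dX x a + dY b y) -> w <= Gl dX dY Rel x y).
Proof.
  intros [X0 _] [Y0 _] [a [b Hab]].
  destruct (glb_fin (fun v => exists a b, Rel a b /\ v = dX x a + dY b y) (dX x a + dY b y))
    as [_ [H1 [H2 H3]]].
  - eauto.
  - intros w [a' [b' [_ ->]]]. pose proof (X0 x a'); pose proof (Y0 b' y); lra.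
  - unfold Gl. split; [exact H1|split].
    + intros a' b' H. apply H2. eauto.
    + intros w Hw. apply H3. intros u [a' [b' [H ->]]]. apply Hw, H.
Qed.

Definition dglue {X Y : Type} (dX : X -> X -> R) (dY : Y -> Y -> R) (Rel : X -> Y -> Prop) (c : R)
  (p q : X + Y) : R :=
  match p, q with
  | inl x, inl x' => dX x x'
  | inr y, inr y' => dY y y'
  | inl x, inr y => Gl dX dY Rel x y + c
  | inr y, inl x => Gl dX dY Rel x y + c
  end.

Lemma Gl_L1 {X Y : Type} (dX : X -> X -> R) (dY : Y -> Y -> R) Rel x x' y :
  is_metric dX -> is_metric dY -> (exists a b, Rel a b) ->
  Gl dX dY Rel x y <= dX x x' + Gl dX dY Rel x' y.
Proof.
  intros HX HY Hne. pose proof HX as [X0 [X1 [X2 X3]]].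
  destruct (Gl_props dX dY Rel x y HX HY Hne) as [_ [G2 _]].
  destruct (Gl_props dX dY Rel x' y HX HY Hne) as [_ [_ G3]].
  enough (Gl dX dY Rel x y - dX x x' <= Gl dX dY Rel x' y) by lra.
  apply G3. intros a b H. pose proof (G2 a b H). pose proof (X3 x x' a). lra.
Qed.

Lemma Gl_L2 {X Y : Type} (dX : X -> X -> R) (dY : Y -> Y -> R) Rel x y y' :
  is_metric dX -> is_metric dY -> (exists a b, Rel a b) ->
  Gl dX dY Rel x y <= Gl dX dY Rel x y' + dY y' y.
Proof.
  intros HX HY Hne. pose proof HY as [Y0 [Y1 [Y2 Y3]]].
  destruct (Gl_props dX dY Rel x y HX HY Hne) as [_ [G2 _]].
  destruct (Gl_props dX dY Rel x y' HX HY Hne) as [_ [_ G3]].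
  enough (Gl dX dY Rel x y - dY y' y <= Gl dX dY Rel x y') by lra.
  apply G3. intros a b H. pose proof (G2 a b H). pose proof (Y3 b y' y). lra.
Qed.

Lemma Gl_L3 {X Y : Type} (dX : X -> X -> R) (dY : Y -> Y -> R) Rel c c' x x'' y :
  is_metric dX -> is_metric dY -> (exists a b, Rel a b) ->
  (forall x y x' y', Rel x y -> Rel x' y' -> Rabs (dX x x' - dY y y') <= 2 * c) -> c <= c' ->
  dX x x'' <= Gl dX dY Rel x y + Gl dX dY Rel x'' y + 2 * c'.
Proof.
  intros HX HY Hne Hd Hc. pose proof HX as [X0 [X1 [X2 X3]]]. pose proof HY as [Y0 [Y1 [Y2 Y3]]].
  destruct (Gl_props dX dY Rel x y HX HY Hne) as [_ [_ G3]].
  destruct (Gl_props dX dY Rel x'' y HX HY Hne) as [_ [_ G3']].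
  enough (dX x x'' - 2 * c' - Gl dX dY Rel x'' y <= Gl dX dY Rel x y) by lra.
  apply G3. intros a b H.
  enough (dX x x'' - 2 * c' - dX x a - dY b y <= Gl dX dY Rel x'' y) by lra.
  apply G3'. intros a' b' H'.
  pose proof (Hd a b a' b' H H'). apply Rabs_le_between in H0.
  pose proof (X3 x a x''). pose proof (X3 a a' x''). pose proof (Y3 b y b').
  rewrite (X2 a' x'') in *. rewrite (Y2 y b') in *. lra.
Qed.

Lemma Gl_L4 {X Y : Type} (dX : X -> X -> R) (dY : Y -> Y -> R) Rel c c' x y y'' :
  is_metric dX -> is_metric dY -> (exists a b, Rel a b) ->
  (forall x y x' y', Rel x y -> Rel x' y' -> Rabs (dX x x' - dY y y') <= 2 * c) -> c <= c' ->
  dY y y'' <= Gl dX dY Rel x y + Gl dX dY Rel x y'' + 2 * c'.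
Proof.
  intros HX HY Hne Hd Hc. pose proof HX as [X0 [X1 [X2 X3]]]. pose proof HY as [Y0 [Y1 [Y2 Y3]]].
  destruct (Gl_props dX dY Rel x y HX HY Hne) as [_ [_ G3]].
  destruct (Gl_props dX dY Rel x y'' HX HY Hne) as [_ [_ G3']].
  enough (dY y y'' - 2 * c' - Gl dX dY Rel x y'' <= Gl dX dY Rel x y) by lra.
  apply G3. intros a b H.
  enough (dY y y'' - 2 * c' - dX x a - dY b y <= Gl dX dY Rel x y'') by lra.
  apply G3'. intros a' b' H'.
  pose proof (Hd a b a' b' H H'). apply Rabs_le_between in H0.
  pose proof (Y3 y b y''). pose proof (Y3 b b' y''). pose proof (X3 a x a').
  rewrite (Y2 y b) in *. rewrite (X2 a x) in *. lra.
Qed.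

Lemma dglue_metric {X Y : Type} (dX : X -> X -> R) (dY : Y -> Y -> R) Rel c c' :
  is_metric dX -> is_metric dY -> corr_ok dX dY Rel c -> c < c' ->
  is_metric (dglue dX dY Rel c').
Proof.
  intros HX HY [Ht1 [Ht2 Hd]] Hc.
  pose proof HX as [X0 [X1 [X2 X3]]]. pose proof HY as [Y0 [Y1 [Y2 Y3]]].
  assert (Hne : forall x : X, exists a b, Rel a b) by (intros x; destruct (Ht1 x) as [y Hy]; exists x, y; exact Hy).
  assert (Hne' : forall y : Y, exists a b, Rel a b) by (intros y; destruct (Ht2 y) as [x Hx]; exists x, y; exact Hx).
  assert (c0 : forall x : X, 0 <= c).
  { intros x. destruct (Ht1 x) as [y Hy]. pose proof (Hd x y x y Hy Hy).
    pose proof (Rabs_pos (dX x x - dY y y)). lra. }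
  assert (c0' : forall y : Y, 0 <= c).
  { intros y. destruct (Ht2 y) as [x Hx]. apply (c0 x). }
  split; [|split; [|split]].
  - intros [x|y] [x'|y']; simpl; auto.
    + destruct (Gl_props dX dY Rel x y' HX HY (Hne x)) as [G0 _]. pose proof (c0 x). lra.
    + destruct (Gl_props dX dY Rel x' y HX HY (Hne x')) as [G0 _]. pose proof (c0 x'). lra.
  - intros [x|y] [x'|y']; simpl.
    + rewrite X1. split; intros HH; [congruence|]. injection HH; auto.
    + destruct (Gl_props dX dY Rel x y' HX HY (Hne x)) as [G0 _]. pose proof (c0 x).
      split; intros HH; [lra|discriminate].
    + destruct (Gl_props dX dY Rel x' y HX HY (Hne x')) as [G0 _]. pose proof (c0 x').
      split; intros HH; [lra|discriminate].
    + rewrite Y1. split; intros HH; [congruence|]. injection HH; auto.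
  - intros [x|y] [x'|y']; simpl; auto.
  - intros [x|y] [x'|y'] [x''|y'']; simpl; auto.
    + apply Rle_trans with (dX x x' + Gl dX dY Rel x' y'' + c'); [|lra].
      pose proof (Gl_L1 dX dY Rel x x' y'' HX HY (Hne x)). lra.
    + pose proof (Gl_L3 dX dY Rel c c' x x'' y' HX HY (Hne x) Hd). lra.
    + pose proof (Gl_L2 dX dY Rel x y'' y' HX HY (Hne x)). lra.
    + pose proof (Gl_L1 dX dY Rel x'' x' y HX HY (Hne x')). rewrite X2. lra.
    + pose proof (Gl_L4 dX dY Rel c c' x' y y'' HX HY (Hne x') Hd). lra.
    + pose proof (Gl_L2 dX dY Rel x'' y y' HX HY (Hne x'')). rewrite Y2. lra.
Qed.

Lemma corr_to_dGH {X Y : Type} (dX : X -> X -> R) (dY : Y -> Y -> R) Rel c :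
  is_metric dX -> is_metric dY -> corr_ok dX dY Rel c -> 0 <= c ->
  Rbar_le (dGH dX dY) (Finite c).
Proof.
  intros HX HY Hc c0. apply rbar_lim. intros e He.
  pose proof HX as [X0 [X1 [X2 X3]]]. pose proof HY as [Y0 [Y1 [Y2 Y3]]].
  pose proof Hc as [Ht1 [Ht2 Hd]].
  assert (HM : is_metric (dglue dX dY Rel (c + e))) by (apply (dglue_metric dX dY Rel c); auto; lra).
  set (S := fun r => 0 <= r /\
    (forall a, (fun z => exists x, z = @inl X Y x) a -> exists b, (fun z => exists y, z = @inr X Y y) b /\ dglue dX dY Rel (c + e) a b <= r) /\
    (forall b, (fun z => exists y, z = @inr X Y y) b -> exists a, (fun z => exists x, z = @inl X Y x) a /\ dglue dX dY Rel (c + e) a b <= r)).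
  assert (HS : S (c + e)).
  { split; [lra|split].
    - intros a [x ->]. destruct (Ht1 x) as [y Hy]. exists (inr y). split; [eauto|]. simpl.
      assert (Hne : exists a b, Rel a b) by (exists x, y; exact Hy).
      destruct (Gl_props dX dY Rel x y HX HY Hne) as [_ [G2 _]].
      pose proof (G2 x y Hy). pose proof (proj2 (X1 x x) eq_refl). pose proof (proj2 (Y1 y y) eq_refl). lra.
    - intros b [y ->]. destruct (Ht2 y) as [x Hx]. exists (inl x). split; [eauto|]. simpl.
      assert (Hne : exists a b, Rel a b) by (exists x, y; exact Hx).
      destruct (Gl_props dX dY Rel x y HX HY Hne) as [_ [G2 _]].
      pose proof (G2 x y Hx). pose proof (proj2 (X1 x x) eq_refl). pose proof (proj2 (Y1 y y) eq_refl). lra. }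
  destruct (glb_fin S (c + e) HS) as [E [_ [H2 _]]].
  { intros w [Hw _]. exact Hw. }
  apply Rbar_le_trans with (Finite (real (Glb_Rbar S))).
  - apply glb_le. exists (X + Y)%type, (dglue dX dY Rel (c + e)), inl, inr.
    split; [exact HM|split; [intros x x'; reflexivity|split; [intros y y'; reflexivity|]]].
    exact E.
  - simpl. apply H2, HS.
Qed.

Lemma trunc_metric {X : Type} (d : X -> X -> R) e : 0 < e -> is_metric d -> is_metric (trunc e d).
Proof.
  intros He [H0 [H1 [H2 H3]]]. unfold trunc.
  split; [|split; [|split]].
  - intros x y. pose proof (H0 x y). unfold Rmin; destruct Rle_dec; lra.
  - intros x y. rewrite <- H1. unfold Rmin; destruct Rle_dec; split; intros; lra.
  - intros x y. rewrite H2. reflexivity.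
  - intros x y z. pose proof (H3 x y z). pose proof (H0 x y). pose proof (H0 y z).
    unfold Rmin; repeat destruct Rle_dec; lra.
Qed.

Lemma trunc_corr {X Y : Type} (dX : X -> X -> R) (dY : Y -> Y -> R) Rel c e :
  corr_ok dX dY Rel c -> corr_ok (trunc e dX) (trunc e dY) Rel c.
Proof.
  intros [H1 [H2 H3]]. split; [exact H1|split; [exact H2|]].
  intros x y x' y' A B. pose proof (H3 x y x' y' A B). unfold trunc.
  apply Rabs_le_between in H. apply Rabs_le. unfold Rmin; repeat destruct Rle_dec; lra.
Qed.

Lemma dGH_nonneg {X Y : Type} (dX : X -> X -> R) (dY : Y -> Y -> R) : Rbar_le (Finite 0) (dGH dX dY).
Proof.
  apply glb_ge. intros v [Z [dZ [f [g [_ [_ [_ Hh]]]]]]].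
  assert (Rbar_le (Finite 0) (Finite v)) by (rewrite <- Hh; apply glb_ge; intros w [Hw _]; exact Hw).
  exact H.
Qed.

Lemma part1 : forall (eps : R), 0 < eps ->
     forall (X Y : Type) (dX : X -> X -> R) (dY : Y -> Y -> R),
       compact_metric_space dX -> compact_metric_space dY ->
       Rbar_le (dGH_eps eps dX dY) (dGH dX dY).
Proof.
  intros e He X Y dX dY [HX _] [HY _]. apply rbar_lim2. intros r Hr.
  destruct (dGH_to_corr dX dY r Hr) as [Rel HR].
  assert (r0 : 0 <= r).
  { pose proof (dGH_nonneg dX dY). destruct (dGH dX dY); simpl in *; lra. }
  apply (corr_to_dGH _ _ Rel); auto using trunc_metric, trunc_corr.
Qed.

Lemma curve_two {X : Type} (d : X -> X -> R) g L z :
  curve_length d g = Finite L -> 0 <= z <= 1 -> d (g 0) (g z) + d (g z) (g 1) <= L.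
Proof.
  intros HL Hz. unfold curve_length in HL.
  destruct (Lub_Rbar_correct (fun s => exists (n : nat) (t : nat -> R),
    t O = 0 /\ t n = 1 /\ (forall i, (i < n)%nat -> t i <= t (S i)) /\
    s = psum d g t n)) as [H1 _].
  rewrite HL in H1.
  set (t := fun i : nat => match i with O => 0 | S O => z | _ => 1 end).
  assert (Rbar_le (Finite (psum d g t 2)) (Finite L)).
  { apply H1. exists 2%nat, t. split; [reflexivity|split; [reflexivity|split; [|reflexivity]]].
    intros i Hi. destruct i as [|[|i]]; simpl; lra. }
  simpl in H. lra.
Qed.

Definition clamp (t : R) := Rmax 0 (Rmin 1 t).

Lemma clamp_prop t : 0 <= clamp t <= 1.
Proof. unfold clamp, Rmax, Rmin; repeat destruct Rle_dec; lra. Qed.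

Lemma clamp_lip s t : Rabs (clamp s - clamp t) <= Rabs (s - t).
Proof.
  unfold clamp, Rmax, Rmin. apply Rabs_le.
  destruct (Rle_dec 0 (s - t)); [rewrite (Rabs_right (s - t)) by lra | rewrite (Rabs_left (s - t)) by lra];
  repeat destruct Rle_dec; lra.
Qed.

Lemma clamp_id t : 0 <= t <= 1 -> clamp t = t.
Proof. intros H. unfold clamp, Rmax, Rmin; repeat destruct Rle_dec; lra. Qed.

Lemma h_cont {X : Type} (d : X -> X -> R) g x :
  is_metric d -> curve_continuous d g -> continuity (fun t => d x (g (clamp t))).
Proof.
  intros [H0 [H1 [H2 H3]]] Hg t. unfold continuity_pt, continue_in, limit1_in, limit_in.
  intros e He. destruct (Hg (clamp t) (clamp_prop t) e He) as [del [Hdel Hd]].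
  exists del. split; [lra|]. intros s [_ Hs]. simpl in *. unfold R_dist in *.
  pose proof (clamp_lip s t).
  pose proof (Hd (clamp s) (clamp_prop s) ltac:(lra)).
  pose proof (H3 x (g (clamp s)) (g (clamp t))). pose proof (H3 x (g (clamp t)) (g (clamp s))).
  rewrite (H2 (g (clamp t)) (g (clamp s))) in H6.
  apply Rabs_lt_between. lra.
Qed.

Lemma midpoint {X : Type} (d : X -> X -> R) x x' s eta :
  is_metric d -> length_space d -> 0 < s < d x x' -> 0 < eta ->
  exists m, d x m = s /\ d m x' <= d x x' - s + eta.
Proof.
  intros HM HL Hs He.
  pose proof (HL x x') as E.
  assert (Rbar_lt (Glb_Rbar (fun L => exists g : R -> X,
      curve_continuous d g /\ g 0 = x /\ g 1 = x' /\ curve_length d g = Finite L)) (Finite (d x x' + eta))).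
  { rewrite <- E. simpl. lra. }
  destruct (glb_lt _ _ H) as [L [[g [Hc [G0 [G1 HL']]]] HLt]].
  destruct (IVT (fun t => d x (g (clamp t)) - s) 0 1) as [z [Hz Hz0]].
  - apply continuity_minus; [apply (h_cont d g x HM Hc)|apply continuity_const; intros a b; reflexivity].
  - lra.
  - rewrite clamp_id by lra. rewrite G0. rewrite (proj2 (proj1 (proj2 HM) x x) eq_refl). lra.
  - rewrite clamp_id by lra. rewrite G1. lra.
  - exists (g z). rewrite clamp_id in Hz0 by lra. split; [lra|].
    pose proof (curve_two d g L z HL' Hz). rewrite G0, G1 in H0. lra.
Qed.

Lemma step_lem {X Y : Type} (dX : X -> X -> R) (dY : Y -> Y -> R) Rel r e s a b a' b' :
  (forall x y x' y', Rel x y -> Rel x' y' -> Rabs (trunc e dX x x' - trunc e dY y y') <= 2 * r) ->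
  is_metric dX -> is_metric dY ->
  dX a a' <= s -> s + 2 * r < e -> Rel a b -> Rel a' b' -> dY b b' <= dX a a' + 2 * r.
Proof.
  intros Hd HX HY Ha Hs H1 H2. pose proof (Hd a b a' b' H1 H2) as H. unfold trunc in H.
  apply Rabs_le_between in H. revert H. unfold Rmin; repeat destruct Rle_dec; intros; lra.
Qed.

Lemma chain {X Y : Type} (dX : X -> X -> R) (dY : Y -> Y -> R) Rel r e s :
  (forall x y x' y', Rel x y -> Rel x' y' -> Rabs (trunc e dX x x' - trunc e dY y y') <= 2 * r) ->
  (forall x, exists y, Rel x y) ->
  is_metric dX -> is_metric dY -> length_space dX -> 0 <= r -> 0 < s -> s + 2 * r < e ->
  forall n x y x' y', Rel x y -> Rel x' y' -> dX x x' < INR n * s ->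
  dY y y' <= dX x x' + 2 * INR n * r.
Proof.
  intros Hd Ht HX HY HL r0 s0 Hs n. induction n as [|n IH]; intros x y x' y' H1 H2 Hlt.
  - pose proof (proj1 HX x x'). simpl in Hlt. lra.
  - rewrite S_INR in *. pose proof (pos_INR n).
    destruct (Rle_dec (dX x x') s) as [Hle|Hgt].
    + pose proof (step_lem dX dY Rel r e s x y x' y' Hd HX HY Hle Hs H1 H2). nra.
    + apply Rle_plus_epsilon. intros eta He.
      set (eta0 := Rmin eta ((INR n + 1) * s - dX x x') / 2).
      assert (E1 : 0 < eta0) by (unfold eta0, Rmin; destruct Rle_dec; lra).
      assert (E2 : eta0 < eta) by (unfold eta0, Rmin; destruct Rle_dec; lra).
      assert (E3 : eta0 < (INR n + 1) * s - dX x x') by (unfold eta0, Rmin; destruct Rle_dec; lra).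
      destruct (midpoint dX x x' s eta0 HX HL ltac:(lra) E1) as [m [Hm1 Hm2]].
      destruct (Ht m) as [ym Hym].
      pose proof (IH m ym x' y' Hym H2 ltac:(lra)).
      pose proof (step_lem dX dY Rel r e s x y m ym Hd HX HY ltac:(lra) Hs H1 Hym).
      pose proof (proj2 (proj2 (proj2 HY)) y ym y'). lra.
Qed.

Lemma diam_bound {X : Type} (d : X -> X -> R) D x x' : Rbar_le (diam d) (Finite D) -> d x x' <= D.
Proof.
  intros H. destruct (Lub_Rbar_correct (fun r => exists x y, r = d x y)) as [H1 _].
  assert (Rbar_le (Finite (d x x')) (Finite D)).
  { apply Rbar_le_trans with (diam d); [apply H1; eauto|exact H]. }
  exact H0.
Qed.

Lemma n_exists D e : 0 < D -> 0 < e -> exists n : nat, D < INR n * (e / 2) /\ INR n <= 2 * D / e + 1.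
Proof.
  intros HD He. destruct (archimed (2 * D / e)) as [A B].
  assert (P : 0 < 2 * D / e) by (apply Rdiv_lt_0_compat; lra).
  exists (Z.to_nat (up (2 * D / e))).
  rewrite INR_IZR_INZ, Z2Nat.id.
  - split; [|lra].
    assert (2 * D / e * (e / 2) = D) by (field; lra).
    assert (2 * D / e * (e / 2) < IZR (up (2 * D / e)) * (e / 2)) by (apply Rmult_lt_compat_r; lra).
    lra.
  - apply le_IZR. simpl. lra.
Qed.

Lemma main_bound {X Y : Type} (dX : X -> X -> R) (dY : Y -> Y -> R) Rel r e D :
  0 < e -> 0 < D -> 0 < r -> is_metric dX -> is_metric dY -> length_space dX -> length_space dY ->
  Rbar_le (diam dX) (Finite D) -> Rbar_le (diam dY) (Finite D) ->
  corr_ok (trunc e dX) (trunc e dY) Rel r -> corr_ok dX dY Rel ((2 * D / e + 1) * r).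
Proof.
  intros He HD Hr HX HY HLX HLY HdX HdY [Ht1 [Ht2 Hd]].
  split; [exact Ht1|split; [exact Ht2|]].
  intros x y x' y' H1 H2.
  pose proof (diam_bound dX D x x' HdX). pose proof (diam_bound dY D y y' HdY).
  pose proof (proj1 HX x x'). pose proof (proj1 HY y y').
  assert (K : 2 * ((2 * D / e + 1) * r) = 4 * r / e * D + 2 * r) by (field; lra).
  rewrite K.
  destruct (Rlt_dec r (e / 4)) as [Hlt|Hge].
  - destruct (n_exists D e HD He) as [n [Hn1 Hn2]].
    assert (Hs : e / 2 + 2 * r < e) by lra.
    pose proof (chain dX dY Rel r e (e/2) Hd Ht1 HX HY HLX ltac:(lra) ltac:(lra) Hs n x y x' y' H1 H2 ltac:(lra)).
    assert (Hd' : forall (y0 : Y) (x0 : X) (y1 : Y) (x1 : X), Rel x0 y0 -> Rel x1 y1 ->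
       Rabs (trunc e dY y0 y1 - trunc e dX x0 x1) <= 2 * r).
    { intros; rewrite Rabs_minus_sym; auto. }
    pose proof (chain dY dX (fun a b => Rel b a) r e (e/2) Hd' Ht2 HY HX HLY ltac:(lra) ltac:(lra) Hs n y x y' x' H1 H2 ltac:(lra)).
    assert (INR n * r <= (2 * D / e + 1) * r) by (apply Rmult_le_compat_r; lra).
    assert (2 * D / e * r = 2 * r / e * D) by (field; lra).
    apply Rabs_le. lra.
  - assert (1 <= 4 * r / e).
    { apply Rmult_le_reg_r with e; [lra|]. field_simplify; lra. }
    assert (D <= 4 * r / e * D) by nra.
    apply Rabs_le. lra.
Qed.

Lemma part2 : forall (eps D : R), 0 < eps -> 0 < D ->
     forall (X Y : Type) (dX : X -> X -> R) (dY : Y -> Y -> R),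
       compact_metric_space dX -> compact_metric_space dY ->
       length_space dX -> length_space dY ->
       Rbar_le (diam dX) (Finite D) -> Rbar_le (diam dY) (Finite D) ->
       Rbar_le (dGH dX dY)
         (Rbar_mult (Finite (2 * D / eps + 1)) (dGH_eps eps dX dY)).
Proof.
  intros e D He HD X Y dX dY [HX _] [HY _] HLX HLY HdX HdY.
  assert (HK : 0 < 2 * D / e + 1) by (assert (0 < 2 * D / e) by (apply Rdiv_lt_0_compat; lra); lra).
  pose proof (dGH_nonneg (trunc e dX) (trunc e dY)) as Hn.
  unfold dGH_eps in *.
  destruct (dGH (trunc e dX) (trunc e dY)) as [del| |] eqn:Ed; simpl in Hn.
  - simpl. apply rbar_lim. intros eta Heta.
    set (K := 2 * D / e + 1) in *.
    set (r := del + eta / K).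
    assert (Hr : 0 < eta / K) by (apply Rdiv_lt_0_compat; lra).
    assert (Hlt : Rbar_lt (dGH (trunc e dX) (trunc e dY)) (Finite r)) by (rewrite Ed; simpl; unfold r; lra).
    destruct (dGH_to_corr _ _ r Hlt) as [Rel HR].
    pose proof (main_bound dX dY Rel r e D He HD ltac:(unfold r; lra) HX HY HLX HLY HdX HdY HR) as HM.
    assert (K * r = K * del + eta) by (unfold r; field; lra).
    rewrite <- H. apply (corr_to_dGH dX dY Rel); auto.
    apply Rmult_le_pos; unfold r; lra.
  - unfold Rbar_mult. simpl. destruct Rle_dec as [h|h]; [|lra].
    destruct Rle_lt_or_eq_dec; [|lra]. destruct (dGH dX dY); simpl; auto.
  - contradiction.
Qed.

Theorem mainTheorem12 :
  (forall (eps : R), 0 < eps ->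
     forall (X Y : Type) (dX : X -> X -> R) (dY : Y -> Y -> R),
       compact_metric_space dX -> compact_metric_space dY ->
       Rbar_le (dGH_eps eps dX dY) (dGH dX dY)) /\
  (forall (eps D : R), 0 < eps -> 0 < D ->
     forall (X Y : Type) (dX : X -> X -> R) (dY : Y -> Y -> R),
       compact_metric_space dX -> compact_metric_space dY ->
       length_space dX -> length_space dY ->
       Rbar_le (diam dX) (Finite D) -> Rbar_le (diam dY) (Finite D) ->
       Rbar_le (dGH dX dY)
         (Rbar_mult (Finite (2 * D / eps + 1)) (dGH_eps eps dX dY))).
Proof. split; [exact part1|exact part2]. Qed.
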